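(* Let $\kappa\ge1$, $n=\kappa+1$, and let $G\in\mathcal G_{[n;\kappa]}$ be skew-symmetric. Then $G$ is a zero-sum game: $\sum_{i=1}^n c_i(x)=0$ for every profile $x\in\{1,\dots,\kappa\}^n$.
   Context: A finite game $G\in\mathcal G_{[n;\kappa]}$ has players $\{1,\dots,n\}$, each with strategy set $\{1,\dots,\kappa\}$, and payoff functions $c_i:\{1,\dots,\kappa\}^n\to\mathbb R$. $G$ is skew-symmetric if for every permutation $\sigma\in\mathbf S_n$, every $i$ and every profile, $c_i(x_1,\dots,x_n)=\mathrm{sgn}(\sigma)\,c_{\sigma(i)}(x_{\sigma^{-1}(1)},\dots,x_{\sigma^{-1}(n)})$. *)

(* Defs.v *)
From HB Require Import structures.
From mathcomp Require Import all_boot all_order all_algebra all_fingroup.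
From mathcomp Require Import reals.
Set Implicit Arguments. Unset Strict Implicit. Unset Printing Implicit Defensive.
Import GRing.Theory Num.Theory.
Local Open Scope ring_scope.

(* Players are 'I_n (i.e. {0,...,n-1} standing for {1,...,n}); strategies are
   'I_k (standing for {1,...,k}). *)
Definition profile (n k : nat) := {ffun 'I_n -> 'I_k}.

Definition game (R : realType) (n k : nat) := 'I_n -> profile n k -> R.

Definition permute_profile (n k : nat) (s : 'S_n) (x : profile n k) : profile n k :=
  [ffun j => x ((s^-1)%g j)].

Definition skew_symmetric (R : realType) (n k : nat) (c : game R n k) : Prop :=
  forall (s : 'S_n) (i : 'I_n) (x : profile n k),
    c i x = (-1) ^+ odd_perm s * c (s i) (permute_profile s x).

Definition zero_sum (R : realType) (n k : nat) (c : game R n k) : Prop :=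
  forall x : profile n k, \sum_(i < n) c i x = 0.

(* Main.v *)
Require Import Defs.
From HB Require Import structures.
From mathcomp Require Import all_boot all_order all_algebra all_fingroup.
From mathcomp Require Import reals.
Import GRing.Theory Num.Theory.
Local Open Scope ring_scope.

Theorem proposition4p2 (R : realType) (k : nat) (c : game R k.+1 k) :
  (1 <= k)%N -> skew_symmetric c -> zero_sum c.
Proof.
move=> _ Hs x.
have : ~~ injectiveb x.
  apply/negP => /injectiveP inj.
  by have := leq_card x inj; rewrite !card_ord ltnn.
case/injectivePn => i [j] nij xij.
set t := tperm i j.
have Px : permute_profile t x = x.
  apply/ffunP => l; rewrite ffunE /t tpermV.
  by case: tpermP => // ->.
have Hl : forall l, c l x = - c (t l) x.
  move=> l; rewrite {1}(Hs t l x) Px odd_tperm nij /= expr1 mulN1r.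
  done.
have : \sum_(l < k.+1) c l x = - \sum_(l < k.+1) c l x.
  rewrite {1}(reindex_inj (@perm_inj _ t)) /= -sumrN.
  by apply: eq_bigr => l _; rewrite (Hl (t l)) /t tpermK.
move/eqP; rewrite -subr_eq0 opprK -mulr2n mulrn_eq0 /=.
by move/eqP.
Qed.
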